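(* Over $\operatorname{Spec}(\mathbb Z[1/2])$ there is an isomorphism of representations of $G$ \[ \rho_4\cong 1\oplus\chi\oplus\rho_2 \] such that the projection to the first summand $1$ (the trivial one-dimensional representation) is the trace homomorphism $\rho_4\to 1$.
   Context: Work with group schemes over $\operatorname{Spec}(\mathbb Z)$. Let $H\subset GL_2$ be the subgroup scheme of invertible matrices that are either diagonal or antidiagonal, and $N:H\to\mathbb G_m$ the homomorphism given by the product of the two nonzero entries. Let $G=\ker N$; its points are the matrices $\mathrm{diag}(\alpha,\alpha^{-1})$ and $\begin{pmatrix}0&\beta\\ \beta^{-1}&0\end{pmatrix}$. Let $\rho_2$ be the tautological $2$-dimensional representation of $G\subset GL_2$. The map $q:G\to G$ squaring each matrix entry is a surjective homomorphism with kernel $\mu_2=\{\pm I\}$. The representations $\det(\rho_2)$ and $\rho_2^\vee\otimes\rho_2$ of the source $G$ of $q$ are trivial on $\mu_2$, hence factor through $q$ and define linear representations $\chi$ and $\rho_4$ of the target $G$; the trace $\rho_2^\vee\otimes\rho_2\to 1$ induces the trace homomorphism $\rho_4\to1$. In the claimed isomorphism, $\rho_2$ denotes the tautological representation of the target $G$. *)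

(* Defs.v *)
From HB Require Import structures.
From mathcomp Require Import all_boot all_order all_algebra.
Set Implicit Arguments. Unset Strict Implicit. Unset Printing Implicit Defensive.
Import Order.TTheory GRing.Theory Num.Theory.
Local Open Scope ring_scope.

(* Base ring Z[1/2]: the dyadic rationals, i.e. rationals whose reduced      *)
(* denominator is a power of 2.                                              *)
Definition dyadic (q : rat) : bool :=
  [exists k : 'I_`|denq q|%N.+1, denq q == (2 ^ (k : nat))%N%:Z].

Definition dyadic_mx m n (P : 'M[rat]_(m, n)) : bool := [forall i, forall j, dyadic (P i j)].

(* The structure map Z[1/2] -> R for a ring R in which 2 is invertible     *)
Definition dy2R (R : unitRingType) (q : rat) : R :=
  (numq q)%:~R * ((denq q)%:~R)^-1.

(* R-points of the group scheme G = ker (N : H -> G_m).                      *)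
(* H is the closed subscheme of GL_2 which is the (disjoint) union of the    *)
(* diagonal and antidiagonal tori; its ideal in the coordinate ring of GL_2  *)
(* is (x12,x21) \cap (x11,x22) = (x11 x12, x11 x21, x22 x12, x22 x21), and   *)
(* on H the map N is x11 x22 + x12 x21.  Indices 0,1 stand for 1,2.          *)
Definition inG (R : comUnitRingType) (A : 'M[R]_2) : Prop :=
  [/\ A 0 0 * A 0 1 = 0, A 0 0 * A 1 0 = 0, A 1 1 * A 0 1 = 0,
      A 1 1 * A 1 0 = 0 & A 0 0 * A 1 1 + A 0 1 * A 1 0 = 1].
(* (invertibility is automatic: det^2 = N^2 = 1 on these points.)           *)

Definition mx4 (R : nmodType) (rows : seq (seq R)) : 'M[R]_4 :=
  \matrix_(i < 4, j < 4) nth 0 (nth [::] rows i) j.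

(* The squaring homomorphism q : G -> G (on points). *)
Definition sqmx (R : comUnitRingType) (A : 'M[R]_2) : 'M[R]_2 :=
  \matrix_(i, j) (A i j) ^+ 2.

(* The representation rho_2^vee (x) rho_2 = End(rho_2) of the SOURCE G,      *)
(* i.e. X |-> g X g^{-1}, as a 4x4 matrix in the basis E11,E12,E21,E22       *)
(* (indices 0,1,2,3), acting on column vectors.  For g in G,                 *)
(* g^{-1} = [[x22, x12],[x21, x11]] (using the defining equations of G).     *)
Definition Ebasis (k : 'I_4) : 'I_2 * 'I_2 :=
  match val k with 0 => (0,0) | 1 => (0,1) | 2 => (1,0) | _ => (1,1) end.
Definition invG (R : comUnitRingType) (A : 'M[R]_2) : 'M[R]_2 :=
  \matrix_(i, j) (if i == j then A (rev_ord i) (rev_ord j) else A i j).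
Definition endrep (R : comUnitRingType) (A : 'M[R]_2) : 'M[R]_4 :=
  \matrix_(k, l) (A (Ebasis k).1 (Ebasis l).1 * invG A (Ebasis l).2 (Ebasis k).2).

(* chi and rho_4 on the TARGET G, i.e. the unique representations with       *)
(* chi o q = det rho_2 and rho_4 o q = rho_2^vee (x) rho_2.  Writing          *)
(* e = x11 x22 (an idempotent on G: 1 on the diagonal component, 0 on the    *)
(* antidiagonal one), these are given by the polynomial formulas below.      *)
(* (On diag(a,1/a): E11,E22 fixed, E12 |-> a E12, E21 |-> a^-1 E21;          *)
(*  on antidiag(b,1/b): E11 <-> E22, E12 |-> b^-1 E21, E21 |-> b E12.)       *)
Definition chiG (R : comUnitRingType) (A : 'M[R]_2) : R := \det A.

Definition rho4 (R : comUnitRingType) (A : 'M[R]_2) : 'M[R]_4 :=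
  let e := A 0 0 * A 1 1 in
  mx4 [:: [:: e; 0; 0; 1 - e];
          [:: 0; A 0 0; A 0 1; 0];
          [:: 0; A 1 0; A 1 1; 0];
          [:: 1 - e; 0; 0; e]].

Definition sum_rep (R : comUnitRingType) (A : 'M[R]_2) : 'M[R]_4 :=
  mx4 [:: [:: 1; 0; 0; 0];
          [:: 0; chiG A; 0; 0];
          [:: 0; 0; A 0 0; A 0 1];
          [:: 0; 0; A 1 0; A 1 1]].

Definition trace_row : 'rV[rat]_4 := \row_(j < 4) (if (j == 0 :> nat) || (j == 3 :> nat) then 1 else 0).

(* Sanity check of the descent: rho4 o q = rho_2^vee (x) rho_2 and           *)
(* chi o q = det on G-points.                                               *)
Lemma rho4_sq (R : comUnitRingType) (A : 'M[R]_2) :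
  inG A -> rho4 (sqmx A) = endrep A.
Proof.
case=> h1 h2 h3 h4 hN.
apply/matrixP=> i j.
rewrite /rho4 /endrep /mx4 /sqmx /invG !mxE.
have r0 : rev_ord (0 : 'I_2) = 1 by apply/val_inj.
have r1 : rev_ord (1 : 'I_2) = 0 by apply/val_inj.
have ef : (A 0 0 * A 1 1) * (A 0 1 * A 1 0) = 0.
  by rewrite mulrACA h1 mul0r.
have he : A 0 0 ^+ 2 * A 1 1 ^+ 2 = A 0 0 * A 1 1.
  rewrite -exprMn expr2 -{3}[A 0 0 * A 1 1]mulr1 -hN mulrDr ef addr0 //.
have hf : 1 - A 0 0 ^+ 2 * A 1 1 ^+ 2 = A 0 1 * A 1 0.
  by rewrite he -hN addrAC subrr add0r.
case: i => [[|[|[|[|i]]]] Hi] //; case: j => [[|[|[|[|j]]]] Hj] //=;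
  rewrite ?mxE /= ?r0 ?r1 ?he ?hf ?expr2 //.

- by rewrite mulrC h3.
- by rewrite mulrC h1.
- by rewrite mulrC h4.
- by rewrite -he hf mulrC.
- by rewrite mulrC h2.
- by rewrite mulrC.
Qed.

Lemma chi_sq (R : comUnitRingType) (A : 'M[R]_2) :
  inG A -> chiG (sqmx A) = \det A.
Proof.
case=> h1 h2 h3 h4 hN.
have d22 (B : 'M[R]_2) : \det B = B 0 0 * B 1 1 - B 0 1 * B 1 0.
  rewrite (expand_det_row _ 0) !big_ord_recl big_ord0 /cofactor !det_mx11 !mxE /=.
  rewrite addr0 expr0 expr1 !mul1r mulN1r.
  rewrite mulrN.
  by congr (_ - _); congr (_ * _); try congr (B _ _); apply: val_inj.
rewrite /chiG !d22 /sqmx !mxE.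
have ef : (A 0 0 * A 1 1) * (A 0 1 * A 1 0) = 0 by rewrite mulrACA h1 mul0r.
rewrite -!exprMn.
have -> : (A 0 0 * A 1 1) ^+ 2 = A 0 0 * A 1 1.
  by rewrite expr2 -{3}[A 0 0 * A 1 1]mulr1 -hN mulrDr ef addr0.
have -> : (A 0 1 * A 1 0) ^+ 2 = A 0 1 * A 1 0.
  by rewrite expr2 -{3}[A 0 1 * A 1 0]mulr1 -hN mulrDr (mulrC (A 0 1 * A 1 0) (A 0 0 * A 1 1)) ef add0r.
by [].
Qed.

(* Main.v *)
Require Import Defs.
From HB Require Import structures.
From mathcomp Require Import all_boot all_order all_algebra.
From mathcomp Require Import ring.
Import GRing.Theory.
Local Open Scope ring_scope.

Definition P0 : 'M[rat]_4 := mx4 [:: [:: 1; 0; 0; 1]; [:: 1; 0; 0; -1]; [:: 0; 1; 0; 0]; [:: 0; 0; 1; 0]].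
Definition Q0 : 'M[rat]_4 := mx4 [:: [:: 1/2; 1/2; 0; 0]; [:: 0; 0; 1; 0]; [:: 0; 0; 0; 1]; [:: 1/2; -(1/2); 0; 0]].

Lemma dy_0 : dyadic 0. Proof. by apply/existsP; exists ord0; done. Qed.
Lemma dy_1 : dyadic 1. Proof. by apply/existsP; exists ord0; done. Qed.
Lemma dy_N1 : dyadic (-1). Proof. by apply/existsP; exists ord0; by rewrite denqN. Qed.
Lemma dy_h : dyadic (1/2). Proof. apply/existsP. have -> : denq (1/2) = 2 by []. by exists (inord 1); rewrite inordK. Qed.
Lemma dy_Nh : dyadic (-(1/2)). Proof. apply/existsP. rewrite denqN. have -> : denq (1/2) = 2 by []. by exists (inord 1); rewrite inordK. Qed.

Lemma dP : dyadic_mx P0.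
Proof. apply/forallP=> i; apply/forallP=> j; rewrite /P0 /mx4 mxE.
case: i => [[|[|[|[|i]]]] Hi] //; case: j => [[|[|[|[|j]]]] Hj] //=;
  by rewrite ?dy_0 ?dy_1 ?dy_N1. Qed.
Lemma dQ : dyadic_mx Q0.
Proof. apply/forallP=> i; apply/forallP=> j; rewrite /Q0 /mx4 mxE.
case: i => [[|[|[|[|i]]]] Hi] //; case: j => [[|[|[|[|j]]]] Hj] //=;
  by rewrite ?dy_0 ?dy_1 ?dy_h ?dy_Nh. Qed.
Lemma PQ : P0 *m Q0 = 1%:M.
Proof. apply/matrixP=> i j; rewrite !mxE !big_ord_recl !big_ord0 !mxE.
case: i => [[|[|[|[|i]]]] Hi] //; case: j => [[|[|[|[|j]]]] Hj] //=; rewrite /= ?mxE /=; (by []) || field. Qed.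
Lemma QP : Q0 *m P0 = 1%:M.
Proof. apply/matrixP=> i j; rewrite !mxE !big_ord_recl !big_ord0 !mxE.
case: i => [[|[|[|[|i]]]] Hi] //; case: j => [[|[|[|[|j]]]] Hj] //=; rewrite /= ?mxE /=; (by []) || field. Qed.

Lemma dy0 (R : unitRingType) : dy2R R 0 = 0. Proof. rewrite /dy2R. have -> : numq 0 = 0 by []. by rewrite mul0r. Qed.
Lemma dy1 (R : unitRingType) : dy2R R 1 = 1. Proof. rewrite /dy2R. have -> : numq 1 = 1 by []. have -> : denq 1 = 1 by []. by rewrite invr1 mulr1. Qed.
Lemma dyN1 (R : unitRingType) : dy2R R (-1) = -1. Proof. rewrite /dy2R. have -> : numq (-1) = -1 by []. have -> : denq (-1) = 1 by []. by rewrite invr1 mulr1. Qed.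

Lemma inter (R : comUnitRingType) (A : 'M[R]_2) : inG A ->
  map_mx (@dy2R R) P0 *m rho4 A = sum_rep A *m map_mx (@dy2R R) P0.
Proof.
case=> h1 h2 h3 h4 hN.
have d22 : \det A = A 0 0 * A 1 1 - A 0 1 * A 1 0.
  rewrite (expand_det_row _ 0) !big_ord_recl !big_ord0 /cofactor !det_mx11 !mxE /=.
  rewrite addr0 expr0 expr1 !mul1r mulN1r.
  rewrite mulrN.
  by congr (_ - _); congr (_ * _); try congr (A _ _); apply: val_inj.
have hf : A 0 1 * A 1 0 = 1 - A 0 0 * A 1 1 by rewrite -hN addrC addKr.
apply/matrixP=> i j; rewrite !mxE !big_ord_recl !big_ord0 !mxE.
case: i => [[|[|[|[|i]]]] Hi] //; case: j => [[|[|[|[|j]]]] Hj] //=;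
  rewrite /rho4 /sum_rep /mx4 /= ?mxE /chiG ?d22 ?hf /= ?dy0 ?dy1 ?dyN1; ring.
Qed.

Theorem proposition5p1 :
  exists P Q : 'M[rat]_4,
    dyadic_mx P /\ dyadic_mx Q /\ P *m Q = 1%:M /\ Q *m P = 1%:M /\
        (forall (R : comUnitRingType), (2 : R) \is a GRing.unit ->
           forall A : 'M[R]_2, inG A ->
             map_mx (@dy2R R) P *m rho4 A = sum_rep A *m map_mx (@dy2R R) P) /\
    row 0 P = trace_row.
Proof.
exists P0, Q0; split; first exact: dP.
split; first exact: dQ.
split; first exact: PQ.
split; first exact: QP.
split; first by move=> R _ A; exact: inter.
apply/matrixP=> i j; rewrite !mxE.
by case: j => [[|[|[|[|j]]]] Hj].
Qed.
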